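(* In the setting below, $$\tau^*(K)=\langle \tau^*(q),\ \overline\varphi(\tau^*(r))\mid q\in Q,\ r\in R,\ \varphi\in\Phi^*\rangle,$$ the subgroup of $M$ generated by these elements.
   Context: Let $G=\langle S\mid Q\mid\Phi\mid R\rangle$ be given by a finite invariant $L$-presentation: $F$ is the free group on the finite set $S$, $Q,R\subseteq F$ finite, $\Phi$ a finite set of endomorphisms of $F$ with generated monoid $\Phi^*$, $K=\langle Q\cup\bigcup_{\varphi\in\Phi^*}\varphi(R)\rangle^F$, and invariance means $\varphi(K)\subseteq K$ for all $\varphi\in\Phi$. Let $n\ge3$ and $K_i:=K\gamma_i(F)$. Let $\tau^*:F\to H^*$ be an epimorphism onto a group $H^*$ with $\ker\tau^*=[K_{n-1},F]$, and let $M:=\tau^*(K_{n-1})$, a central (hence abelian) subgroup of $H^*$. For $\varphi\in\Phi^*$, $\overline\varphi$ denotes the endomorphism of $M$ with $\overline\varphi(\tau^*(k))=\tau^*(\varphi(k))$ for $k\in K_{n-1}$. *)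

(* Defs.v *)
From HB Require Import structures.
From mathcomp Require Import all_boot.

Set Implicit Arguments.
Unset Strict Implicit.
Unset Printing Implicit Defensive.

Local Open Scope group_scope.

Section GroupSets.
Variable G : groupType.

Definition gset := G -> Prop.

Definition gsubset (A B : gset) : Prop := forall x, A x -> B x.

Definition gfull : gset := fun _ => True.

Definition gunion (A B : gset) : gset := fun x => A x \/ B x.

Definition is_subgroup (A : gset) : Prop :=
  A 1 /\ (forall x y, A x -> A y -> A (x * y)) /\ (forall x, A x -> A x^-1).

Definition gen (X : gset) : gset :=
  fun g => forall H : gset, is_subgroup H -> gsubset X H -> H g.

Definition ncl (X : gset) : gset :=
  gen (fun g => exists x h, X x /\ g = x ^ h).

Definition gcomm (A B : gset) : gset :=
  gen (fun g => exists a b, A a /\ B b /\ g = [~ a, b]).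

Definition gprod (A B : gset) : gset :=
  fun g => exists a b, A a /\ B b /\ g = a * b.

(* lower central series: lcs_aux k = gamma_{k+1}(G) *)
Fixpoint lcs_aux (k : nat) : gset :=
  match k with
  | 0 => gfull
  | k'.+1 => gcomm (lcs_aux k') gfull
  end.

(* gamma i = gamma_i(G), with gamma_1(G) = G, gamma_{i+1}(G) = [gamma_i(G), G]
   (gamma 0 is conventionally also G; it is never used with i = 0 here) *)
Definition gamma (i : nat) : gset := lcs_aux i.-1.

End GroupSets.

Definition is_hom (G H : groupType) (f : G -> H) : Prop :=
  forall x y, f (x * y) = f x * f y.

Definition gimage (G H : groupType) (f : G -> H) (A : gset G) : gset H :=
  fun h => exists a, A a /\ h = f a.

Definition is_free_on (S : Type) (F : groupType) (iota : S -> F) : Prop :=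
  forall (H : groupType) (f : S -> H),
    exists g : F -> H, is_hom g /\ (forall s, g (iota s) = f s) /\
      (forall g' : F -> H, is_hom g' -> (forall s, g' (iota s) = f s) ->
         forall x, g' x = g x).

(* the element of Phi^* given by a word l = [:: i1; ...; ik] over the index
   set of Phi: phi_{i1} o ... o phi_{ik} (the empty word is the identity) *)
Definition phi_word (F : groupType) (I : Type) (Phi : I -> F -> F)
  (l : seq I) : F -> F :=
  fun x => foldr (fun i y => Phi i y) x l.

Definition Lpres_K (F : groupType) (I : Type) (Q R : seq F) (Phi : I -> F -> F)
  : gset F :=
  ncl (gunion (fun g => g \in Q)
              (fun g => exists (l : seq I) r, r \in R /\ g = phi_word Phi l r)).

(* Main.v *)
Require Import Defs.
From HB Require Import structures.
From mathcomp Require Import all_boot.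
Local Open Scope group_scope.

Section Aux.
Variables (G H : groupType) (f : G -> H) (fh : is_hom f).

Lemma hom1 : f 1 = 1.
Proof.
apply: (@mulgI _ (f 1)); by rewrite -fh !mulg1.
Qed.

Lemma homV x : f x^-1 = (f x)^-1.
Proof.
symmetry; apply: mulg1_eq; by rewrite -fh mulgV hom1.
Qed.
End Aux.

Lemma gen_sub (G : groupType) (X : gset G) : is_subgroup (gen X).
Proof.
split; [|split].
- by move=> K [].
- move=> x y hx hy K hK hXK; case: (hK) => _ [hm _]; apply: hm; [exact: hx|exact: hy].
- move=> x hx K hK hXK; case: (hK) => _ [_ hi]; apply: hi; exact: hx.
Qed.

Lemma gen_in (G : groupType) (X : gset G) x : X x -> gen X x.
Proof. by move=> hx K _ hXK; apply: hXK. Qed.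

Lemma gamma1 (G : groupType) k : @gamma G k 1.
Proof.
rewrite /gamma; case: k.-1 => [|j] //=; by case: (@gen_sub G (fun g => exists a b, @lcs_aux G j a /\ @gfull G b /\ g = [~ a, b])) => ? _.
Qed.

Theorem mainTheorem7
  (S : finType) (F : groupType) (iota : S -> F) (Hfree : is_free_on iota)
  (Q R : seq F) (I : finType) (Phi : I -> F -> F)
  (Phi_hom : forall i, is_hom (Phi i))
  (Hinv : forall i, gsubset (gimage (Phi i) (Lpres_K Q R Phi)) (Lpres_K Q R Phi))
  (n : nat) (hn : 3 <= n)
  (Hs : groupType) (tau : F -> Hs) (tau_hom : is_hom tau)
  (tau_surj : forall h : Hs, exists g, tau g = h)
  (tau_ker : forall g, tau g = 1 <->
     gcomm (gprod (Lpres_K Q R Phi) (@gamma F n.-1)) (@gfull F) g)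
  (phibar : seq I -> Hs -> Hs)
  (phibar_def : forall (l : seq I) (k : F),
     gprod (Lpres_K Q R Phi) (@gamma F n.-1) k ->
     phibar l (tau k) = tau (phi_word Phi l k)) :
  forall h : Hs,
    gimage tau (Lpres_K Q R Phi) h <->
    gen (gunion (fun x => exists q, q \in Q /\ x = tau q)
                (fun x => exists (l : seq I) r, r \in R /\ x = phibar l (tau r))) h.
Proof.
set K := Lpres_K Q R Phi.
have inKg : forall k, K k -> gprod K (@gamma F n.-1) k.
  by move=> k hk; exists k, 1; split=> //; split; [exact: gamma1|rewrite mulg1].
have Ksub : is_subgroup K by exact: gen_sub.
have XK : forall x, (gunion (fun g => g \in Q)
              (fun g => exists (l : seq I) r, r \in R /\ g = phi_word Phi l r)) x -> K x.
  move=> x hx; apply: gen_in; exists x, 1; split=> //; by rewrite conjg1.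
have conjK : forall x g, K x -> tau (x ^ g) = tau x.
  move=> x g hx.
  have h1 : tau [~ x, g] = 1.
    apply/tau_ker; apply: gen_in; exists x, g; split; first exact: inKg.
    by split.
  move: h1; rewrite commgEl tau_hom homV // => h1.
  have := mulg1_eq h1; rewrite invgK => <-; done.
move=> h; split.
- case=> a [ha ->]; clear h.
  pose P := fun a => gen (gunion (fun x => exists q, q \in Q /\ x = tau q)
                (fun x => exists (l : seq I) r, r \in R /\ x = phibar l (tau r))) (tau a).
  apply: (ha P).
  + have [g1 [gm gi]] := @gen_sub Hs (gunion (fun x => exists q, q \in Q /\ x = tau q)
                (fun x => exists (l : seq I) r, r \in R /\ x = phibar l (tau r))).
    split; [|split].
    * by rewrite /P hom1.
    * by move=> x y hx hy; rewrite /P tau_hom; apply: gm.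
    * by move=> x hx; rewrite /P homV //; apply: gi.
  + move=> y [x [g [hx ->]]].
    rewrite /P conjK; last exact: XK.
    apply: gen_in; case: hx => [hq|[l [r [hr ->]]]].
    * by left; exists x.
    * right; exists l, r; split=> //; rewrite phibar_def //.
      apply: inKg; apply: XK; right; exists [::], r; done.
- move=> hg; apply: hg.
  + case: Ksub => k1 [km ki]; split; [|split].
    * by exists 1; split=> //; rewrite hom1.
    * move=> x y [a [ha ->]] [b [hb ->]]; exists (a * b); split; [exact: km|by rewrite tau_hom].
    * move=> x [a [ha ->]]; exists a^-1; split; [exact: ki|by rewrite homV].
  + move=> x [[q [hq ->]]|[l [r [hr ->]]]].
    * by exists q; split=> //; apply: XK; left.
    * exists (phi_word Phi l r); split.
      -- by apply: XK; right; exists l, r.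
      -- rewrite phibar_def //; apply: inKg; apply: XK; right; by exists [::], r.
Qed.
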